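(* Let $p\ge2$, $n,\ell,t$ be positive integers, $r\le n$ a nonnegative integer, $\xi$ a prime with $\xi>\max(t,r)$, and $\mathbf{a}=(a_1,\dots,a_t)\in\{0,1,\dots,\xi-1\}^t$. Then the code $\mathcal{C}_{p,t,\ell}(n,r,\mathbf{a},\xi)$ is $t$-zero-block-insertion-correcting with block length $\ell$.
   Context: $\mathbb{Z}_p=\{0,1,\dots,p-1\}$. Any $\mathbf{z}\in\mathbb{Z}_p^n$ of Hamming weight $r$ can be written uniquely as $\mathbf{z}=0^{b_1}u_10^{b_2}u_2\cdots u_r0^{b_{r+1}}$ with $u_i\in\mathbb{Z}_p\setminus\{0\}$ and $b_i\ge0$ (so $b_i$ is the number of zeros having exactly $i-1$ nonzero symbols to their left). Define $$\mathcal{C}_{p,t,\ell}(n,r,\mathbf{a},\xi)=\Bigl\{\mathbf{z}\in\mathbb{Z}_p^n:\ \mathrm{wt}_H(\mathbf{z})=r,\ \sum_{i=1}^{r+1}i^q\Bigl\lfloor\frac{b_i}{\ell}\Bigr\rfloor\equiv a_q\pmod{\xi}\text{ for all }1\le q\le t\Bigr\}.$$ A zero-block insertion of length $\ell$ transforms a word $\mathbf{u}\mathbf{w}$ into $\mathbf{u}0^\ell\mathbf{w}$ (for any split point). A code is $t$-zero-block-insertion-correcting (block length $\ell$) if for any two distinct codewords, the sets of words obtainable from them by at most $t$ successive zero-block insertions of length $\ell$ are disjoint. *)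

(* Defs.v *)
From mathcomp Require Import all_boot.
Set Implicit Arguments. Unset Strict Implicit. Unset Printing Implicit Defensive.

Definition is_word (p n : nat) (z : seq nat) : bool :=
  (size z == n) && all (fun x => x < p) z.

Definition wtH (z : seq nat) : nat := count (fun x => x != 0) z.

Definition bblock (z : seq nat) (i : nat) : nat :=
  \sum_(j < size z) ((nth 0 z j == 0) && (wtH (take j z) == i.-1)).

Definition code (p t l n r : nat) (a : seq nat) (xi : nat) (z : seq nat) : Prop :=
  [/\ is_word p n z, wtH z = r &
      forall q, 1 <= q <= t ->
        \sum_(1 <= i < r.+2) i ^ q * (bblock z i %/ l) = nth 0 a q.-1 %[mod xi]].

Definition zb_ins (l : nat) (x y : seq nat) : Prop :=
  exists u w, x = u ++ w /\ y = u ++ nseq l 0 ++ w.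

Fixpoint zb_ins_k (l k : nat) (x y : seq nat) : Prop :=
  match k with
  | 0 => x = y
  | k'.+1 => exists v, zb_ins_k l k' x v /\ zb_ins l v y
  end.

Definition zb_ball (l t : nat) (x y : seq nat) : Prop :=
  exists k, k <= t /\ zb_ins_k l k x y.

Definition zb_insertion_correcting (l t : nat) (C : seq nat -> Prop) : Prop :=
  forall c1 c2, C c1 -> C c2 -> c1 <> c2 ->
    forall y, ~ (zb_ball l t c1 y /\ zb_ball l t c2 y).

(* Main.v *)
Require Import Defs.
From mathcomp Require Import all_boot.
From mathcomp Require Import all_algebra ring zify.
Set Implicit Arguments. Unset Strict Implicit. Unset Printing Implicit Defensive.
Import GRing.Theory.

Section Fld.
Local Open Scope ring_scope.
Variable F : fieldType.

Definition Ap (s : seq F) : {poly F} := \prod_(x <- s) (1 - x%:P * 'X).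
Definition Ps (T : nat) (s : seq F) : {poly F} :=
  \sum_(x <- s) \sum_(1 <= q < T.+1) (x%:P * 'X) ^+ q.

Lemma geom (y : {poly F}) T :
  (1 - y) * \sum_(1 <= q < T.+1) y ^+ q = y - y ^+ T.+1.
Proof.
elim: T => [|T IH]; first by rewrite big_geq // mulr0 expr1 subrr.
rewrite big_nat_recr //= mulrDr IH. rewrite !exprS. ring.
Qed.

Lemma newton T s : exists R, 'X * (Ap s)^`() + Ap s * Ps T s = 'X^(T.+1) * R.
Proof.
elim: s => [|x s [R IH]].
  by exists 0; rewrite /Ap /Ps !big_nil -polyC1 derivC !mulr0 add0r.
set y := x%:P * 'X.
have Ey : y ^+ T.+1 = 'X^(T.+1) * (x ^+ T.+1)%:P by rewrite exprMn rmorphXn mulrC.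
exists ((1 - y) * R - (x ^+ T.+1)%:P * Ap s).
rewrite /Ap /Ps !big_cons -/(Ap s) -/(Ps T s) -/y.
rewrite derivM derivB derivC /y deriv_mulC derivX -/y.
have -> : 'X * ((0 - x%:P * 1) * Ap s + (1 - y) * (Ap s)^`()) +
   (1 - y) * Ap s * (\sum_(1 <= q < T.+1) y ^+ q + Ps T s) =
   (1 - y) * ('X * (Ap s)^`() + Ap s * Ps T s) + Ap s * ((1 - y) * \sum_(1 <= q < T.+1) y ^+ q) - y * Ap s.
  rewrite /y; ring.
rewrite IH geom Ey; ring.
Qed.


Lemma Ps0 T s : (Ps T s)`_0 = 0.
Proof.
rewrite -horner_coef0 /Ps horner_sum big1 // => x _.
rewrite horner_sum big1_seq // => q; rewrite mem_index_iota => /andP[].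
by case: q => // q _ _; rewrite !hornerE expr0n.
Qed.

Lemma size_Ap s : (size (Ap s) <= (size s).+1)%N.
Proof.
elim: s => [|x s IH]; first by rewrite /Ap big_nil size_poly1.
rewrite /Ap big_cons -/(Ap s).
apply: leq_trans (size_polyMleq _ _) _.
have h : (size (1 - x%:P * 'X)%R <= 2)%N.
  apply: leq_trans (size_polyD _ _) _; rewrite size_polyN size_poly1 geq_max /=.
  apply: leq_trans (size_polyMleq _ _) _; rewrite size_polyX size_polyC.
  by case: (x != 0).
move: (size (1 - x%:P * 'X)%R) (size (Ap s)) h IH => a b; rewrite /=; lia.
Qed.

Lemma Ap_coef0 s : (Ap s)`_0 = 1.
Proof.
rewrite -horner_coef0 /Ap horner_prod big1_seq // => x _.
by rewrite !hornerE subr0.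
Qed.

Lemma Ap_eqn T s m : (m <= T)%N ->
  (Ap s)`_m *+ m + \sum_(j < m.+1) (Ap s)`_j * (Ps T s)`_(m - j) = 0.
Proof.
move=> hm; have [R HR] := newton T s.
have := congr1 (fun p : {poly F} => p`_m) HR => /=.
rewrite coefD coefXnM ltnS hm coefXM coefM.
case: m hm => [|m] hm /=; first by rewrite mulr0n.
by rewrite coef_deriv.
Qed.

Lemma Ap_eq T s1 s2 : (size s1 <= T)%N -> (size s2 <= T)%N ->
  (forall m, (0 < m <= T)%N -> m%:R != 0 :> F) -> Ps T s1 = Ps T s2 ->
  Ap s1 = Ap s2.
Proof.
move=> h1 h2 hF hP; apply/polyP => m.
case: (leqP m T) => hm; last first.
  rewrite !nth_default //.
    by apply: leq_trans (size_Ap _) _; lia.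
  by apply: leq_trans (size_Ap _) _; lia.
suff H : forall j, (j <= m)%N -> (Ap s1)`_j = (Ap s2)`_j by apply: H.
elim: m hm => [|m IH] hm j hj.
  have -> : j = 0%N by lia. by rewrite !Ap_coef0.
case: (ltnP j m.+1) => hjm; first by apply: IH => //; lia.
have -> : j = m.+1 by lia.
have e1 := Ap_eqn s1 hm; have e2 := Ap_eqn s2 hm.
rewrite big_ord_recr /= subnn Ps0 mulr0 addr0 in e1.
rewrite big_ord_recr /= subnn Ps0 mulr0 addr0 in e2.
have : (Ap s1)`_m.+1 *+ m.+1 = (Ap s2)`_m.+1 *+ m.+1.
  apply: (addIr (\sum_(i < m.+1) (Ap s1)`_(widen_ord (leqnSn m.+1) i) * (Ps T s1)`_(m.+1 - widen_ord (leqnSn m.+1) i))).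
  rewrite e1 hP; symmetry; rewrite -[RHS]e2.
  rewrite (eq_bigr (fun i : 'I_m.+1 => (Ap s2)`_i * (Ps T s2)`_(m.+1 - i))) // => i _ /=.
  by rewrite IH ?(ltnW hm) // -ltnS ltn_ord.
have hF' : (m.+1)%:R != 0 :> F by apply: (hF m.+1).
move=> H.
have H' : (Ap s1)`_m.+1 * (m.+1)%:R = (Ap s2)`_m.+1 * (m.+1)%:R by rewrite !mulr_natr.
exact: (mulIf hF' H').
Qed.

Lemma Ap_rem c s : c \in s -> Ap s = (1 - c%:P * 'X) * Ap (rem c s).
Proof. by move=> cs; rewrite /Ap (perm_big _ (perm_to_rem cs)) big_cons. Qed.

Lemma mem_Ap x s1 s2 : x != 0 -> x \in s1 -> Ap s1 = Ap s2 -> x \in s2.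
Proof.
move=> nx xs1 E.
have h1 : (Ap s1).[x^-1] = 0.
  by rewrite (Ap_rem xs1) !hornerE mulfV // subrr mul0r.
have h2 : \prod_(y <- s2) (1 - y * x^-1) == 0.
  by rewrite E horner_prod in h1; rewrite -h1; apply/eqP/eq_bigr => y _; rewrite !hornerE.
move: h2; apply: contraLR => xs2; rewrite prodf_seq_neq0; apply/allP => y ys2 /=.
rewrite subr_eq0; apply/negP => /eqP h.
have : 1 * x = y * x^-1 * x by rewrite h.
rewrite mul1r mulfVK // => exy; move: xs2; rewrite exy ys2.
done.
Qed.

Lemma Ap_perm n s1 s2 : size s1 = n -> size s2 = n -> Ap s1 = Ap s2 -> perm_eq s1 s2.
Proof.
elim: n s1 s2 => [|n IH] s1 s2.
  by case: s1 => // _; case: s2.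
move=> z1 z2 E.
have [c [c1 c2]] : exists c, c \in s1 /\ c \in s2.
  case: (boolP (has (fun x => x != 0) s1)) => [/hasP[x xs1 nx]|h1].
    by exists x; split => //; apply: (mem_Ap nx xs1 E).
  case: (boolP (has (fun x => x != 0) s2)) => [/hasP[x xs2 nx]|h2].
    by exists x; split => //; apply: (mem_Ap nx xs2 (esym E)).
  case: s1 z1 h1 {E} => // a s1 _ /hasPn h1.
  case: s2 z2 h2 => // b s2 _ /hasPn h2.
  exists 0; split.
    by have := h1 a (mem_head _ _); rewrite negbK => /eqP <-; apply: mem_head.
  by have := h2 b (mem_head _ _); rewrite negbK => /eqP <-; apply: mem_head.
have nz : (1 - c%:P * 'X) != 0 :> {poly F}.
  apply/eqP => h; have := congr1 (fun p : {poly F} => p.[0]) h.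
  by rewrite !hornerE subr0 => /eqP; rewrite oner_eq0.
rewrite (Ap_rem c1) (Ap_rem c2) in E.
have := IH (rem c s1) (rem c s2).
rewrite !size_rem // z1 z2 => /(_ erefl erefl (mulfI nz E)) hp.
apply: perm_trans (perm_to_rem c1) _.
by rewrite perm_sym; apply: perm_trans (perm_to_rem c2) _; rewrite perm_cons perm_sym.
Qed.

Lemma pow_perm T (s1 s2 : seq F) : size s1 = size s2 -> (size s1 <= T)%N ->
  (forall m, (0 < m <= T)%N -> m%:R != 0 :> F) ->
  (forall q, (0 < q <= T)%N -> \sum_(x <- s1) x ^+ q = \sum_(x <- s2) x ^+ q) ->
  perm_eq s1 s2.
Proof.
move=> zs hT hF hq.
apply: (Ap_perm (n := size s1)) => //.
apply: (Ap_eq (T := T)) => //; first by rewrite -zs.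
rewrite /Ps exchange_big [RHS]exchange_big; apply: eq_big_seq => q.
rewrite mem_index_iota => hq'.
rewrite (eq_bigr (fun x => (x^+q)%:P * 'X^q)); last by move=> x _; rewrite exprMn rmorphXn.
rewrite [RHS](eq_bigr (fun x => (x^+q)%:P * 'X^q)); last by move=> x _; rewrite exprMn rmorphXn.
by rewrite -!mulr_suml -!rmorph_sum hq.
Qed.
End Fld.


Definition B (z : seq nat) (k : nat) : nat :=
  \sum_(j < size z) ((nth 0 z j == 0) && (wtH (take j z) == k)).

Lemma B_nil k : B [::] k = 0.
Proof. by rewrite /B big_ord0. Qed.

Lemma B_cons x z k : B (x :: z) k = ((x == 0) && (k == 0)) +
  (if x == 0 then B z k else if k is k'.+1 then B z k' else 0).
Proof.
rewrite /B /= big_ord_recl /=; congr (_ + _); first by case: k.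
under eq_bigr => i _ do rewrite add0n.
case: x => [|x] /=; first by [].
case: k => [|k]; last by under eq_bigr => i _ do rewrite add1n.
by rewrite big1 // => i _; rewrite add1n andbF.
Qed.

Lemma wtH_cons x s : wtH (x :: s) = (x != 0) + wtH s.
Proof. by []. Qed.

Lemma B_nseq l w k : B (nseq l 0 ++ w) k = l * (k == 0) + B w k.
Proof.
elim: l => [|l IH] //=; by rewrite B_cons /= IH mulSn addnA.
Qed.

Lemma B_ins u w l k : B (u ++ nseq l 0 ++ w) k = B (u ++ w) k + l * (k == wtH u).
Proof.
elim: u k => [|x u IH] k /=; first by rewrite B_nseq addnC.
rewrite !B_cons; case: x => [|x] /=.
  by rewrite IH add0n addnA.
case: k => [|k]; first by rewrite add1n muln0.
by rewrite IH add1n eqSS.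
Qed.

Definition nz := fun x : nat => x != 0.

Lemma determine z1 z2 : filter nz z1 = filter nz z2 ->
  (forall k, B z1 k = B z2 k) -> z1 = z2.
Proof.
elim: z1 z2 => [|x z1 IH] [|y z2] //=.
- case: y => [|y] //= _ /(_ 0); rewrite B_nil B_cons /=; lia.
- case: x => [|x] //= _ /(_ 0); rewrite B_nil B_cons /=; lia.
- rewrite /nz; case: x => [|x]; case: y => [|y] /= hf h.
  + congr (_ :: _); apply: IH => // k; have := h k; rewrite !B_cons /=.
    by move/addnI.
  + by have := h 0; rewrite !B_cons /=; lia.
  + by have := h 0; rewrite !B_cons /=; lia.
  + case: hf => -> hf; congr (_ :: _); apply: IH => // k.
    by have := h k.+1; rewrite !B_cons.
Qed.

Lemma filter_nseq0 l : filter nz (nseq l 0) = [::].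
Proof. by elim: l. Qed.

Lemma wtH_filter z : wtH z = size (filter nz z).
Proof. by rewrite size_filter. Qed.

Lemma ins1 l x y : zb_ins l x y -> [/\ size y = size x + l, filter nz y = filter nz x &
  exists u, wtH u <= wtH x /\ forall k, B y k = B x k + l * (k == wtH u)].
Proof.
case=> u [w [-> ->]]; split.
- rewrite !size_cat size_nseq; lia.
- by rewrite !filter_cat filter_nseq0.
- exists u; split; last by move=> k; rewrite B_ins.
  by rewrite /wtH count_cat leq_addr.
Qed.

Lemma insk l k x y : zb_ins_k l k x y -> [/\ size y = size x + k * l,
  filter nz y = filter nz x &
  exists s, [/\ size s = k, all (fun j => j <= wtH x) s &
     forall j, B y j = B x j + l * count_mem j s]].
Proof.
elim: k y => [|k IH] y /=.
  move=> ->; split; first by rewrite mul0n addn0.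
    by [].
  by exists [::]; split => // j; rewrite /= muln0 addn0.
case=> v [/IH [sv fv [s [ss sa hs]]] /ins1 [sy fy [u [hu hB]]]].
have wv : wtH v = wtH x by rewrite !wtH_filter fv.
split.
- rewrite sy sv mulSn; lia.
- by rewrite fy fv.
- exists (wtH u :: s); split => /=.
  + by rewrite ss.
  + by rewrite sa andbT -wv.
  + by move=> j; rewrite hB hs (eq_sym (wtH u)) mulnDr [l * (j == _) + _]addnC addnA.
Qed.

Lemma sum_cnt r q s : all (fun j => j <= r) s ->
  \sum_(1 <= i < r.+2) i ^ q * count_mem i.-1 s = \sum_(x <- s) x.+1 ^ q.
Proof.
elim: s => [|x s IH] /=.
  by move=> _; rewrite big_nil big1 // => i _; rewrite muln0.
move/andP=> [hx hs]; rewrite big_cons -IH //.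
under eq_bigr => i _ do rewrite mulnDr.
rewrite big_split /=; congr (_ + _).
rewrite (bigD1_seq x.+1) /=.
- rewrite eqxx muln1 big1_seq ?addn0 // => i /andP[hi].
  rewrite mem_index_iota => hr.
  have -> : (x == i.-1) = false by apply/eqP; lia.
  by rewrite muln0.
- by rewrite mem_index_iota; lia.
- by have := iota_uniq 1 r.+1.
Qed.

Lemma mod_inj a b m : 0 < a <= m -> 0 < b <= m -> a %% m = b %% m -> a = b.
Proof.
move=> /andP[a0 am] /andP[b0 bm]; rewrite leq_eqVlt in am; rewrite leq_eqVlt in bm.
case/orP: am => [/eqP->|am]; case/orP: bm => [/eqP->|bm]; rewrite ?modnn ?modn_small //; lia.
Qed.

Lemma bblockE z i : bblock z i = B z i.-1.
Proof. by []. Qed.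

Theorem lemma4 (p n l t r xi : nat) (a : seq nat) :
  2 <= p -> 0 < n -> 0 < l -> 0 < t -> r <= n ->
  prime xi -> maxn t r < xi ->
  size a = t -> all (fun x => x < xi) a ->
  zb_insertion_correcting l t (code p t l n r a xi).
Proof.
move=> p2 n0 l0 t0 rn pxi hxi sa aa c1 c2 C1 C2 neq y [[k1 [k1t I1]] [k2 [k2t I2]]].
move: hxi; rewrite gtn_max => /andP[txi rxi].
case: C1 => [w1 wt1 q1]; case: C2 => [w2 wt2 q2].
have sz1 : size c1 = n by case/andP: w1 => /eqP.
have sz2 : size c2 = n by case/andP: w2 => /eqP.
case: (insk I1) => [sy1 fy1 [s1 [ss1 sa1 hs1]]].
case: (insk I2) => [sy2 fy2 [s2 [ss2 sa2 hs2]]].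
have ek : k1 = k2.
  apply/eqP; rewrite -(eqn_pmul2r l0); apply/eqP.
  rewrite sz1 in sy1; rewrite sz2 in sy2; lia.
subst k2.
have Hdiv : forall j, B c1 j %/ l + count_mem j s1 = B c2 j %/ l + count_mem j s2.
  move=> j; have e := congr1 (fun z => z %/ l) (etrans (esym (hs1 j)) (hs2 j)).
  rewrite /= ![l * _]mulnC ![_ + _ * l]addnC !divnMDl // in e.
  by rewrite addnC e addnC.
have hmod : forall q, 1 <= q <= t ->
    \sum_(x <- s1) x.+1 ^ q = \sum_(x <- s2) x.+1 ^ q %[mod xi].
  move=> q hq.
  have e1 := q1 q hq; have e2 := q2 q hq.
  have E : \sum_(1 <= i < r.+2) i ^ q * (bblock c1 i %/ l) + \sum_(x <- s1) x.+1 ^ q =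
           \sum_(1 <= i < r.+2) i ^ q * (bblock c2 i %/ l) + \sum_(x <- s2) x.+1 ^ q.
    rewrite -(@sum_cnt r q s1); last by rewrite -wt1.
    rewrite -(@sum_cnt r q s2); last by rewrite -wt2.
    rewrite -!big_split /=; apply: eq_bigr => i _.
    by rewrite -!mulnDr !bblockE Hdiv.
  have := congr1 (fun z => z %% xi) E => /=.
  rewrite -modnDml e1 -e2 modnDml => /eqP; rewrite eqn_modDl => /eqP.
  done.
pose g := fun x : nat => ((x.+1)%:R)%R : 'F_xi.
have ginj : forall x z, x <= r -> z <= r -> g x = g z -> x = z.
  move=> x z hx hz e.
  have := val_Fp_nat pxi x.+1; have := val_Fp_nat pxi z.+1.
  rewrite /g in e; rewrite e => -> e'.
  suff : z.+1 = x.+1 by case.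
  apply: (@mod_inj _ _ xi) => //; apply/andP; split => //; lia.
have hp : perm_eq (map g s1) (map g s2).
  apply: (pow_perm (T := t)).
  - by rewrite !size_map ss1 ek.
  - by rewrite size_map ss1.
  - move=> m /andP[m0 mt]; apply/eqP => h.
    have := val_Fp_nat pxi m; rewrite h => e.
    have : (0%R : 'F_xi) = (0%:R)%R by [].
    move=> e0; have := val_Fp_nat pxi 0; rewrite -e0 e => e3.
    move: e3; rewrite mod0n modn_small //; [lia | lia].
  - move=> q /andP[q0 qt]; rewrite !big_map.
    under eq_bigr do rewrite /g -natrX.
    under [RHS]eq_bigr do rewrite -natrX.
    rewrite -!natr_sum -(Fp_nat_mod pxi) -[RHS](Fp_nat_mod pxi).
    by rewrite hmod // q0.
have hcnt : forall j, count_mem j s1 = count_mem j s2.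
  move=> j; case: (leqP j r) => hj.
    have cE : forall s, all (fun x => x <= r) s ->
        count_mem j s = count_mem (g j) (map g s).
      move=> s hs; rewrite count_map; apply: eq_in_count => x xs /=.
      apply/eqP/eqP => [->//|]; apply: ginj => //; exact: (allP hs).
    rewrite cE; last by rewrite -wt1.
    rewrite cE; last by rewrite -wt2.
    by move/permP: hp; apply.
  have z1 : forall s, all (fun x => x <= r) s -> count_mem j s = 0.
    move=> s hs; apply/count_memPn/negP => /(allP hs); lia.
  rewrite z1; last by rewrite -wt1.
  by rewrite z1 // -wt2.
apply: neq; apply: determine.
  by rewrite -fy1 fy2.
move=> j; have := hs1 j; have := hs2 j; rewrite hcnt; lia.
Qed.
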